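(* Let $a\in\mathbb{C}$, $|a|<1$. Then \[ \sum_{k=1}^{\infty}k\zeta(2k+1)a^{2k-2}=\frac12\sum_{n=1}^{\infty}\frac{(-1)^{n-1}p(n)}{n\binom{2n}{n}^5(n^2-a^2)^2(n^2-a^2/4)^2}\prod_{m=1}^{n-1}\frac{1-4a^2/m^2}{(1-a^2/(m+n)^2)^2}, \] where $p(n)=2(2n-1)(3n-1)(4n^2-a^2)^2+(n^2-a^2)^2(13n^2-2a^2)$.
   Context: $\zeta$ is the Riemann zeta function. *)

(* Defs.v *)
From Stdlib Require Import Reals.
From Coquelicot Require Import Coquelicot.
Open Scope R_scope.

(* Riemann zeta function on real arguments s > 1: zeta s = sum_{n>=1} n^{-s}.
   (Only used at s = 2k+1 >= 3, where the series converges.) *)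
Definition zeta (s : R) : R := Series (fun n : nat => / Rpower (INR (S n)) s).

Fixpoint Cpow (z : C) (n : nat) : C :=
  match n with O => RtoC 1 | S k => Cmult z (Cpow z k) end.

Fixpoint Cprod1 (f : nat -> C) (N : nat) : C :=
  match N with O => RtoC 1 | S k => Cmult (Cprod1 f k) (f (S k)) end.

Definition cbinom (n : nat) : R := Binomial.C (2 * n) n.

Definition pcor6 (a : C) (n : nat) : C :=
  let x := RtoC (INR n) in
  Cplus (Cmult (RtoC 2) (Cmult (Cminus (Cmult 2 x) 1) (Cmult (Cminus (Cmult 3 x) 1)
          (Cpow (Cminus (Cmult 4 (Cpow x 2)) (Cpow a 2)) 2))))
        (Cmult (Cpow (Cminus (Cpow x 2) (Cpow a 2)) 2)
               (Cminus (Cmult 13 (Cpow x 2)) (Cmult 2 (Cpow a 2)))).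

Definition lhs_term (a : C) (k : nat) : C :=
  Cmult (RtoC (INR k * zeta (INR (2 * k + 1)))) (Cpow a (2 * k - 2)).

Definition rhs_term (a : C) (n : nat) : C :=
  let x := RtoC (INR n) in
  Cmult (RtoC (1/2))
   (Cmult
    (Cdiv (Cmult (RtoC ((-1) ^ (n - 1))) (pcor6 a n))
          (Cmult (RtoC (INR n * (cbinom n) ^ 5))
            (Cmult (Cpow (Cminus (Cpow x 2) (Cpow a 2)) 2)
                   (Cpow (Cminus (Cpow x 2) (Cdiv (Cpow a 2) 4)) 2))))
    (Cprod1 (fun m => let y := RtoC (INR m) in
               Cdiv (Cminus 1 (Cdiv (Cmult 4 (Cpow a 2)) (Cpow y 2)))
                    (Cpow (Cminus 1 (Cdiv (Cpow a 2) (Cpow (RtoC (INR (m + n))) 2))) 2))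
            (n - 1))).

(* Main.v *)
Require Import Defs.
From Stdlib Require Import Reals.
From Coquelicot Require Import Coquelicot.
From Stdlib Require Import Lra Lia Factorial ClassicalEpsilon.
Open Scope R_scope.

Module AlgM.
Open Scope C_scope.

Section S.
Local Notation Cpow := Defs.Cpow.
Variable a : C.
Definition A := Cpow a 2.
Definition CR (n : nat) : C := RtoC (INR n).
Definition qq (j : nat) : C := Cpow (Cminus (Cpow (CR j) 2) A) 2.
Definition Num (n : nat) : C :=
  Cprod1 (fun m => Cmult (Cpow (CR m) 2) (Cminus (Cpow (CR m) 2) (Cmult 4 A))) n.
Definition Den (n k : nat) : C := Cmult (qq k) (Cprod1 (fun i => qq (k + i)) n).
Definition Hker (n k : nat) : C := Cdiv (Num n) (Den n k).
Definition cc (n : nat) : C := RtoC (INR (fact n) ^ 2 / (2 * INR (fact (2 * n))))%R.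
Definition sg (n : nat) : C := RtoC ((-1) ^ n)%R.
Definition F (n k : nat) : C := sg n * cc n * (2 * CR k + CR n) * Hker n k.
Definition G (n k : nat) : C :=
  sg n * Hker n k * (cc n / (2 * CR n + 1)) *
  (CR k * CR k + (3 * CR n + 1) * CR k + (5 * CR n * CR n + 4 * CR n + 1) / 2 - A).

Lemma CR_S n : CR (S n) = CR n + 1.
Proof. unfold CR. rewrite S_INR. now rewrite RtoC_plus. Qed.
Lemma CR_add n m : CR (n + m) = CR n + CR m.
Proof. unfold CR. rewrite plus_INR. now rewrite RtoC_plus. Qed.

Lemma sg_S n : sg (S n) = - sg n.
Proof. unfold sg. simpl pow. rewrite RtoC_mult. rewrite <- RtoC_opp. ring_simplify. 
 rewrite RtoC_opp. ring. Qed.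

Lemma fact_pos n : (0 < INR (fact n))%R.
Proof. apply lt_0_INR. apply lt_O_fact. Qed.

Lemma RtoC_neq (x : R) : x <> 0%R -> RtoC x <> 0.
Proof. intros H E. apply H. now injection E. Qed.

Ltac cnz := repeat (rewrite <- RtoC_plus || rewrite <- RtoC_mult || rewrite <- RtoC_minus); apply RtoC_neq; nra.

Lemma cc_S n : cc (S n) = cc n * (CR n + 1) / (2 * (2 * CR n + 1)).
Proof.
  unfold cc, CR.
  replace (2 * S n)%nat with (S (S (2 * n))) by lia.
  rewrite !fact_simpl. rewrite !mult_INR. rewrite !S_INR. rewrite mult_INR. simpl (INR 2).
  pose proof (fact_pos n). pose proof (fact_pos (2*n)). pose proof (pos_INR n).
  simpl pow. rewrite !RtoC_div by (intro; nra).
  repeat (rewrite RtoC_mult || rewrite RtoC_plus).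
  field. repeat split; cnz.
Qed.

Definition Cn (n : nat) : C := Cmult (Cpow (CR (S n)) 2) (Cminus (Cpow (CR (S n)) 2) (Cmult 4 A)).

Lemma Num_S n : Num (S n) = Num n * Cn n.
Proof. reflexivity. Qed.

Lemma Den_S n k : Den (S n) k = Den n k * qq (k + S n).
Proof. unfold Den. simpl Cprod1. ring. Qed.

Lemma Den_Sk n k : Den n (S k) * qq k = Den n k * qq (k + S n).
Proof.
  induction n.
  - unfold Den. simpl Cprod1. replace (k + 1)%nat with (S k) by lia.
    replace (S k + 0)%nat with (S k) by lia. ring.
  - rewrite !Den_S. 
    replace (S k + S n)%nat with (k + S (S n))%nat by lia.
    replace (k + S n)%nat with (S k + n)%nat by lia.
    transitivity (Den n (S k) * qq k * qq (k + S (S n))). ring.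
    rewrite IHn. replace (k + S n)%nat with (S k + n)%nat by lia. ring.
Qed.

Lemma H_S n k : Den n k <> 0 -> qq (k + S n) <> 0 ->
  Hker (S n) k = Hker n k * Cn n / qq (k + S n).
Proof. intros. unfold Hker. rewrite Num_S, Den_S. field. auto. Qed.

Lemma H_Sk n k : Den n k <> 0 -> qq k <> 0 -> qq (k + S n) <> 0 ->
  Hker n (S k) = Hker n k * qq k / qq (k + S n).
Proof. intros. unfold Hker.
  assert (E: Den n (S k) = Den n k * qq (k + S n) / qq k).
  { rewrite <- Den_Sk. field. auto. }
  rewrite E. field. repeat split; auto.
Qed.

Lemma WZ n k : Den n k <> 0 -> qq k <> 0 -> qq (k + S n) <> 0 ->
  F (S n) k - F n k = G n (S k) - G n k.
Proof.
  intros H1 H2 H3. unfold F, G.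
  rewrite H_S, H_Sk by auto. rewrite sg_S, cc_S.
  unfold qq, Cn in *. rewrite !CR_S in *. rewrite CR_add, CR_S in *. simpl Cpow in *.
  assert (2 * CR n + 1 <> 0). { unfold CR. pose proof (pos_INR n). cnz. }
  assert ((CR k + (CR n + 1)) * (CR k + (CR n + 1)) - A <> 0).
  { intro Z. apply H3. rewrite !Cmult_1_r. rewrite Z. ring. }
  field. auto.
Qed.

Lemma Cprod1_ext (f g : nat -> C) n : (forall m, (1 <= m <= n)%nat -> f m = g m) -> Cprod1 f n = Cprod1 g n.
Proof. induction n; intros E; simpl. auto. rewrite IHn by (intros; apply E; lia). rewrite E by lia. auto. Qed.

Lemma Cprod1_mult (f g : nat -> C) n : Cprod1 (fun m => f m * g m) n = Cprod1 f n * Cprod1 g n.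
Proof. induction n; simpl. ring. rewrite IHn. ring. Qed.

Lemma Cprod1_nz (g : nat -> C) n : (forall m, (1 <= m <= n)%nat -> g m <> 0) -> Cprod1 g n <> 0.
Proof. induction n; intros E; simpl. 
  - apply RtoC_neq. lra.
  - apply Cmult_neq_0. apply IHn. intros; apply E; lia. apply E; lia. Qed.

Lemma Cprod1_div (f g : nat -> C) n : (forall m, (1 <= m <= n)%nat -> g m <> 0) ->
  Cprod1 (fun m => f m / g m) n = Cprod1 f n / Cprod1 g n.
Proof. induction n; intros E; simpl. 
  - field; apply RtoC_neq; lra.
  - rewrite IHn. 
    + assert (Cprod1 g n <> 0) by (apply Cprod1_nz; intros; apply E; lia).
      assert (g (S n) <> 0) by (apply E; lia).
      field. auto.
    + intros; apply E; lia. Qed.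

Definition CRf (n : nat) : C := RtoC (INR (fact n)).

Lemma Cprod1_fact s n : Cprod1 (fun m => CR (s + m)) n * CRf s = CRf (s + n).
Proof. induction n; simpl Cprod1.
  - rewrite Nat.add_0_r. ring.
  - replace (s + S n)%nat with (S (s + n)) by lia. unfold CRf at 2. rewrite fact_simpl.
    rewrite mult_INR, RtoC_mult. fold (CRf (s+n)). rewrite <- IHn.
    unfold CR. ring. Qed.

Definition p4 (x : C) : C := x * x * x * x.

Lemma Cprod1_p4 (f : nat -> C) n : Cprod1 (fun m => p4 (f m)) n = p4 (Cprod1 f n).
Proof. unfold p4. rewrite !Cprod1_mult. auto. Qed.

Lemma CR_nz m : (1 <= m)%nat -> CR m <> 0.
Proof. intros. unfold CR. apply RtoC_neq. apply not_0_INR. lia. Qed.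

Lemma CRf_nz m : CRf m <> 0.
Proof. unfold CRf. apply RtoC_neq. pose proof (fact_pos m). lra. Qed.

Lemma prod_id n : Cprod1 (fun m => CR m) n = CRf n.
Proof. induction n; simpl Cprod1. unfold CRf; simpl. auto.
  rewrite IHn. unfold CRf, CR. rewrite fact_simpl, mult_INR, RtoC_mult. ring. Qed.

Lemma prod_rhs n (Hq : forall j, (1 <= j)%nat -> qq j <> 0) :
  Cprod1 (fun m => let y := RtoC (INR m) in
               Cdiv (Cminus 1 (Cdiv (Cmult 4 (Cpow a 2)) (Cpow y 2)))
                    (Cpow (Cminus 1 (Cdiv (Cpow a 2) (Cpow (RtoC (INR (m + S n))) 2))) 2)) n
  = Num n * p4 (Cprod1 (fun m => CR (S n + m)) n) / (p4 (CRf n) * Cprod1 (fun m => qq (S n + m)) n).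
Proof.
  rewrite (Cprod1_ext _ (fun m => (Cmult (Cpow (CR m) 2) (Cminus (Cpow (CR m) 2) (Cmult 4 A))) * p4 (CR (S n + m))
      / (p4 (CR m) * qq (S n + m)))).
  - rewrite Cprod1_div. unfold Num. rewrite !Cprod1_mult, !Cprod1_p4, prod_id. reflexivity.
    intros m Hm. apply Cmult_neq_0. unfold p4. pose proof (CR_nz m ltac:(lia)).
    repeat apply Cmult_neq_0; auto. apply Hq. lia.
  - intros m Hm. cbv zeta. pose proof (CR_nz m ltac:(lia)) as H0. pose proof (Hq (S n + m)%nat ltac:(lia)) as H1.
    pose proof (CR_nz (S n + m) ltac:(lia)) as H2.
    replace (m + S n)%nat with (S n + m)%nat by lia. remember (S n + m)%nat as j.
    unfold qq, A, p4 in *. fold (CR m). fold (CR j).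
    simpl Cpow in *.
    assert (CR j * CR j - a * a <> 0). 
    { intro Z. apply H1. transitivity ((CR j * CR j - a * a) * (CR j * CR j - a * a)). ring. rewrite Z. ring. }
    field. auto.
Qed.

Lemma Den_nz n k (Hq : forall j, (1 <= j)%nat -> qq j <> 0) : (1 <= k)%nat -> Den n k <> 0.
Proof. intros Hk. unfold Den. apply Cmult_neq_0. apply Hq; lia. apply Cprod1_nz. intros; apply Hq; lia. Qed.

Lemma CRf_S m : CRf (S m) = (CR m + 1) * CRf m.
Proof. unfold CRf. rewrite fact_simpl, mult_INR, RtoC_mult. fold (CR (S m)). rewrite CR_S. auto. Qed.

Lemma diag n (Hq : forall j, (1 <= j)%nat -> qq j <> 0) :
  rhs_term a (S n) = F (S n) (S n) + G n (S n).
Proof.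
  unfold rhs_term. replace (S n - 1)%nat with n by lia.
  rewrite prod_rhs by auto.
  pose proof (Cprod1_fact (S n) n) as Pf.
  replace (S n + n)%nat with (S (2 * n)) in Pf by lia.
  assert (PQnz : Cprod1 (fun m => qq (S n + m)) n <> 0) by (apply Cprod1_nz; intros; apply Hq; lia).
  assert (Eq1 : Cprod1 (fun m => CR (S n + m)) n = CRf (S (2 * n)) / CRf (S n)).
  { rewrite <- Pf. field. apply CRf_nz. }
  rewrite Eq1.
  unfold F, G, Hker. rewrite Num_S, Den_S. unfold Den.
  unfold cbinom. unfold Binomial.C. replace (2 * S n - S n)%nat with (S n) by lia.
  replace (2 * S n)%nat with (S (S (2 * n))) by lia.
  pose proof (fact_pos (S n)). pose proof (fact_pos (S (S (2 * n)))).
  fold (sg n). rewrite (RtoC_div 1 2) by lra.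
  rewrite RtoC_mult, RtoC_pow, RtoC_div by (intro; nra). repeat rewrite RtoC_mult. fold (CRf (S n)). fold (CRf (S (S (2*n)))).
  rewrite sg_S. rewrite cc_S. unfold cc. rewrite RtoC_div. 2:{ pose proof (fact_pos (2*n)). nra. }
  rewrite RtoC_pow, RtoC_mult. fold (CRf n). fold (CRf (2 * n)).
  rewrite !CRf_S. fold (CR (S n)).
  set (P := Cprod1 (fun m => qq (S n + m)) n). set (Nm := Num n).
  replace (S n + S n)%nat with (S (S (2 * n))) by lia.
  pose proof (Hq (S n) ltac:(lia)) as Q1. pose proof (Hq (S (S (2 * n))) ltac:(lia)) as Q2.
  unfold pcor6, qq, Cn, A in Q1, Q2 |- *.
  change (RtoC (INR (S n))) with (CR (S n)) in *.
  assert (E3 : CR (S (S (2 * n))) = 2 * CR n + 1 + 1) by (rewrite !CR_S; unfold CR; rewrite mult_INR, RtoC_mult; auto).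
  replace (S n + S n)%nat with (S (S (2 * n))) by lia.
  rewrite E3 in Q2 |- *.
  repeat rewrite CR_S in Q1. repeat rewrite CR_S.
  replace (CR (2 * n)) with (2 * CR n) in * by (unfold CR; rewrite mult_INR; rewrite RtoC_mult; auto).
  assert (E2 : CR (S (2 * n)) = 2 * CR n + 1) by (rewrite CR_S; unfold CR; rewrite mult_INR, RtoC_mult; auto).

  unfold cc. set (f2 := CRf (2 * n)) in *. set (fn := CRf n) in *. set (x := CR n) in *.
  unfold p4. simpl Defs.Cpow in Q1, Q2 |- *. simpl Complex.Cpow.
  assert (Xnz : forall y : C, y * (y * 1) * (y * (y * 1) * 1) <> 0 -> y * y <> 0).
  { intros y Y Z. apply Y. transitivity ((y*y)*(y*y)). ring. rewrite Z. ring. }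
  assert (N1 : x + 1 <> 0) by (unfold x, CR; pose proof (pos_INR n); cnz).
  assert (N2 : 2 * x + 1 <> 0) by (unfold x, CR; pose proof (pos_INR n); cnz).
  assert (N3 : fn <> 0) by apply CRf_nz.
  assert (N4 : f2 <> 0) by apply CRf_nz.
  assert (N5 : (x + 1) * (x + 1) - a * a <> 0).
  { intro Z. apply Q1. transitivity (((x + 1) * (x + 1) - a * a) * ((x + 1) * (x + 1) - a * a)). ring. rewrite Z; ring. }
  assert (N6 : (2 * x + 1 + 1) * (2 * x + 1 + 1) - a * a <> 0).
  { intro Z. apply Q2. transitivity (((2 * x + 1 + 1) * (2 * x + 1 + 1) - a * a) * ((2 * x + 1 + 1) * (2 * x + 1 + 1) - a * a)). ring. rewrite Z; ring. }
  assert (N7 : (x + 1) * (x + 1) - a * a / 4 <> 0).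
  { intro Z. apply N6. transitivity (4 * ((x + 1) * (x + 1) - a * a / 4)). field. rewrite Z; ring. }
  fold P in PQnz.
  assert (N8 : 2 * x + 1 + 1 <> 0) by (unfold x, CR; pose proof (pos_INR n); cnz).
  field. repeat split; auto.
Qed.
End S.

End AlgM.
Import AlgM.

Module AnaM.
Open Scope R_scope.

Definition cv (u : nat -> C) (l : C) : Prop :=
  forall eps, 0 < eps -> exists N, forall n, (N <= n)%nat -> Cmod (Cminus (u n) l) < eps.

Lemma cv_filterlim (u : nat -> C) l : cv u l -> filterlim u eventually (@locally C_UniformSpace l).
Proof.
  intros H. apply filterlim_locally. intros eps.
  destruct (H eps (cond_pos eps)) as [N HN]. exists N. intros n Hn.
  apply C_NormedModule_mixin_compat1. apply HN. lia.
Qed.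

Lemma filterlim_cv (u : nat -> C) l : filterlim u eventually (@locally C_UniformSpace l) -> cv u l.
Proof.
  intros H eps Heps. 
  assert (Hs : 0 < eps / 2) by lra.
  destruct (proj1 (filterlim_locally u l) H (mkposreal _ Hs)) as [N HN].
  exists N. intros n Hn. specialize (HN n Hn). 
  apply C_NormedModule_mixin_compat2 in HN. simpl in HN.
  assert (sqrt 2 < 2).
  { rewrite <- (sqrt_square 2) at 2 by lra. apply sqrt_lt_1; lra. }
  assert (Hc : Cmod (minus (u n) l) < sqrt 2 * (eps / 2)) by exact HN.
  change (Cmod (minus (u n) l) < eps).
  assert (sqrt 2 * (eps / 2) < eps) by nra. lra.
Qed.

Lemma series_cv (a : nat -> C) l : is_series a l <-> cv (sum_n a) l.
Proof. split. intros H. apply filterlim_cv. exact H. intros H. apply cv_filterlim. exact H. Qed.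

Open Scope C_scope.
Lemma Cmod_tri3 x y z : (Cmod (x - z) <= Cmod (x - y) + Cmod (y - z))%R.
Proof. replace (x - z) with ((x - y) + (y - z)) by ring. apply Cmod_triangle. Qed.

Lemma Cmod_tri2 (x y : C) : (Cmod x <= Cmod (x - y) + Cmod y)%R.
Proof. replace x with ((x - y) + y) at 1 by ring. apply Cmod_triangle. Qed.

Lemma Cmod_sym x y : Cmod (x - y) = Cmod (y - x).
Proof. replace (x - y) with (- (y - x)) by ring. apply Cmod_opp. Qed.

Lemma Cmod_small_eq x y : (forall eps, 0 < eps -> Cmod (x - y) < eps)%R -> x = y.
Proof. intros H. assert (Cmod (x - y) = 0%R).
  { destruct (Cmod_ge_0 (x - y)) as [Hp|Hp]; auto. specialize (H _ Hp). lra. }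
  apply Cmod_eq_0 in H0. replace x with ((x - y) + y) by ring. rewrite H0. ring. Qed.

Lemma cv_unique u l1 l2 : cv u l1 -> cv u l2 -> l1 = l2.
Proof.
  intros H1 H2. apply Cmod_small_eq. intros eps He.
  destruct (H1 (eps/2)%R ltac:(lra)) as [N1 HN1]. destruct (H2 (eps/2)%R ltac:(lra)) as [N2 HN2].
  specialize (HN1 (N1 + N2)%nat ltac:(lia)). specialize (HN2 (N1 + N2)%nat ltac:(lia)).
  pose proof (Cmod_tri3 l1 (u (N1+N2)%nat) l2) as H. rewrite (Cmod_sym l1 (u _)) in H. lra.
Qed.

Lemma is_series_unique_C (a : nat -> C) l1 l2 : is_series a l1 -> is_series a l2 -> l1 = l2.
Proof. rewrite !series_cv. apply cv_unique. Qed.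

Definition cvR (u : nat -> R) (l : R) : Prop :=
  forall eps, (0 < eps)%R -> exists N, forall n, (N <= n)%nat -> (Rabs (u n - l) < eps)%R.

Lemma series_cvR (a : nat -> R) l : is_series a l -> cvR (sum_n a) l.
Proof.
  intros H eps He. destruct (proj1 (filterlim_locally (sum_n a) l) H (mkposreal _ He)) as [N HN].
  exists N. intros n Hn. specialize (HN n Hn). exact HN.
Qed.

Lemma cvR_series (a : nat -> R) l : cvR (sum_n a) l -> is_series a l.
Proof.
  intros H. apply filterlim_locally. intros eps. destruct (H eps (cond_pos eps)) as [N HN].
  exists N. intros n Hn. apply HN. lia.
Qed.

Lemma sum_n_RtoC (u : nat -> R) n : sum_n (fun k => RtoC (u k)) n = RtoC (sum_n u n).
Proof. induction n. rewrite !sum_O. auto. rewrite !sum_Sn, IHn. 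
  change (RtoC (sum_n u n) + RtoC (u (S n)) = RtoC (sum_n u n + u (S n))%R). rewrite RtoC_plus. auto. Qed.

Lemma series_RtoC (u : nat -> R) l : is_series u l -> is_series (fun k => RtoC (u k)) (RtoC l).
Proof.
  intros H. apply series_cv. intros eps He. destruct (series_cvR u l H eps He) as [N HN].
  exists N. intros n Hn. rewrite sum_n_RtoC. rewrite <- RtoC_minus, Cmod_R. apply HN; auto.
Qed.

Lemma series_scal (c : C) (a : nat -> C) l : is_series a l -> is_series (fun k => c * a k) (c * l).
Proof. intros H. apply (@is_series_scal C_AbsRing C_NormedModule c a l H). Qed.

Lemma series_plus (a b : nat -> C) la lb : is_series a la -> is_series b lb -> is_series (fun k => a k + b k) (la + lb).
Proof. intros H1 H2. apply (@is_series_plus C_AbsRing C_NormedModule a b la lb H1 H2). Qed.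

Lemma series_minus (a b : nat -> C) la lb : is_series a la -> is_series b lb -> is_series (fun k => a k - b k) (la - lb).
Proof. intros H1 H2. apply (@is_series_minus C_AbsRing C_NormedModule a b la lb H1 H2). Qed.

Lemma series_ext (a b : nat -> C) l : (forall n, a n = b n) -> is_series a l -> is_series b l.
Proof. intros E H. apply (@is_series_ext C_AbsRing C_NormedModule a b l E H). Qed.

Lemma sum_n_shift (a : nat -> C) n : sum_n a (S n) = a O + sum_n (fun k => a (S k)) n.
Proof. unfold sum_n. rewrite sum_Sn_m by lia. rewrite <- sum_n_m_S. reflexivity. Qed.

Lemma series_shift (a : nat -> C) l : is_series (fun k => a (S k)) l -> is_series a (a O + l).
Proof. rewrite !series_cv. intros H eps He. destruct (H eps He) as [N HN]. exists (S N).
  intros n Hn. destruct n. lia. rewrite sum_n_shift.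
  replace (a O + sum_n (fun k => a (S k)) n - (a O + l)) with (sum_n (fun k => a (S k)) n - l) by ring.
  apply HN. lia. Qed.

Lemma sum_n_Cmod (a : nat -> C) (b : nat -> R) n : (forall k, Cmod (a k) <= b k)%R ->
  (Cmod (sum_n a n) <= sum_n b n)%R.
Proof. intros Hb. induction n. rewrite !sum_O. auto. rewrite !sum_Sn.
  change (Cmod (sum_n a n + a (S n)) <= sum_n b n + b (S n))%R.
  eapply Rle_trans. apply Cmod_triangle. specialize (Hb (S n)). lra. Qed.

Lemma series_Cmod_le (a : nat -> C) (b : nat -> R) (l : C) (lb : R) : is_series a l -> is_series b lb ->
  (forall k, Cmod (a k) <= b k)%R -> (Cmod l <= lb)%R.
Proof.
  intros Ha Hb Hab. apply series_cv in Ha. apply series_cvR in Hb.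
  apply Rnot_lt_le. intros Hlt. set (e := ((Cmod l - lb) / 3)%R).
  destruct (Ha e ltac:(unfold e; lra)) as [N1 H1]. destruct (Hb e ltac:(unfold e; lra)) as [N2 H2].
  specialize (H1 (N1 + N2)%nat ltac:(lia)). specialize (H2 (N1 + N2)%nat ltac:(lia)).
  pose proof (sum_n_Cmod a b (N1 + N2) Hab) as Hs.
  pose proof (Cmod_tri2 l (sum_n a (N1+N2))) as H0. rewrite Cmod_sym in H0.
  apply Rabs_def2 in H2. unfold e in *. lra.
Qed.

Lemma ex_series_C (a : nat -> C) (b : nat -> R) : (forall k, Cmod (a k) <= b k)%R -> ex_series b ->
  exists l, is_series a l.
Proof. intros H1 H2. apply (@ex_series_le C_AbsRing C_CompleteNormedModule a b H1 H2). Qed.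

Lemma sum_n_tele (u : nat -> C) n : sum_n (fun k => u (S k) - u k) n = u (S n) - u O.
Proof. induction n. rewrite sum_O. auto. rewrite sum_Sn, IHn. change (u (S n) - u O + (u (S (S n)) - u (S n)) = u (S (S n)) - u O). ring. Qed.

Lemma series_tele (u : nat -> C) : cv u 0 -> is_series (fun k => u (S k) - u k) (- u O).
Proof.
  intros H. apply series_cv. intros eps He. destruct (H eps He) as [N HN]. exists N.
  intros n Hn. rewrite sum_n_tele. replace (u (S n) - u O - - u O) with (u (S n) - 0) by ring. apply HN. lia.
Qed.

End AnaM.
Import AnaM.

Module RealHM.
Open Scope R_scope.

Definition tb (k : nat) : R := / (INR (k + 1) * INR (k + 2)).

Lemma tb_sum n : sum_n tb n = 1 - / INR (n + 2).
Proof.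
  induction n.
  - rewrite sum_O. unfold tb. simpl. field.
  - rewrite sum_Sn, IHn. change (1 - / INR (n + 2) + tb (S n) = 1 - / INR (S n + 2)).
    unfold tb. replace (S n + 1)%nat with (n + 2)%nat by lia.
    replace (S n + 2)%nat with (n + 3)%nat by lia.
    rewrite !plus_INR. simpl. pose proof (pos_INR n). field. lra.
Qed.

Lemma inv_small eps : 0 < eps -> exists N, forall n, (N <= n)%nat -> / INR (n + 1) < eps.
Proof.
  intros He. destruct (archimed_cor1 eps He) as [N [HN HN0]]. exists N. intros n Hn.
  eapply Rle_lt_trans; [|exact HN]. apply Rinv_le_contravar. apply lt_0_INR; lia.
  apply le_INR. lia.
Qed.

Lemma tb_series : is_series tb 1.
Proof.
  apply cvR_series. intros eps He. destruct (inv_small eps He) as [N HN]. exists N.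
  intros n Hn. rewrite tb_sum. 
  assert (0 < / INR (n + 2)). { apply Rinv_0_lt_compat. apply lt_0_INR. lia. }
  assert (/ INR (n + 2) <= / INR (n + 1)). { apply Rinv_le_contravar. apply lt_0_INR; lia. apply le_INR; lia. }
  specialize (HN n Hn). rewrite Rabs_left; lra.
Qed.

Lemma tb_pos k : 0 < tb k.
Proof. unfold tb. apply Rinv_0_lt_compat. apply Rmult_lt_0_compat; apply lt_0_INR; lia. Qed.

Lemma tb_ex (c : R) : is_series (fun k => c * tb k) (c * 1).
Proof. apply (@is_series_scal R_AbsRing R_NormedModule c tb 1 tb_series). Qed.

Lemma bernoulli h n : 0 <= h -> 1 + INR n * h + INR n * (INR n - 1) / 2 * h ^ 2 <= (1 + h) ^ n.
Proof.
  intros Hh. induction n.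
  - simpl. lra.
  - rewrite S_INR. simpl pow. simpl pow in IHn. pose proof (pos_INR n).
    assert (0 <= INR n * (INR n - 1) / 2 * (h * (h * (h * 1)))).
    { destruct n. simpl. lra. rewrite S_INR in *. pose proof (pos_INR n).
      apply Rmult_le_pos. apply Rmult_le_pos. nra. lra. nra. }
    assert ((1 + h) * (1 + INR n * h + INR n * (INR n - 1) / 2 * (h * (h * 1))) <= (1 + h) * (1 + h) ^ n).
    { apply Rmult_le_compat_l; lra. }
    nra.
Qed.

Lemma Kq q : 0 <= q < 1 -> cvR (fun K => INR K * q ^ K) 0.
Proof.
  intros Hq eps He. destruct (Req_dec q 0) as [Z|NZ].
  - exists 1%nat. intros n Hn. subst. rewrite pow_i by lia. rewrite Rmult_0_r, Rminus_0_r, Rabs_R0. lra.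
  - set (h := / q - 1).
    assert (Hh : 0 < h). { unfold h. assert (1 < / q). { rewrite <- Rinv_1. apply Rinv_lt_contravar; lra. } lra. }
    assert (Hq' : q = / (1 + h)). { unfold h. replace (1 + (/ q - 1)) with (/ q) by ring. rewrite Rinv_inv. auto. }
    destruct (inv_small (eps * h ^ 2 / 2)) as [N HN]. { apply Rmult_lt_0_compat; [apply Rmult_lt_0_compat; [lra| apply pow_lt; lra] | lra]. }
    exists (S (S N)). intros n Hn. rewrite Rminus_0_r. 
    pose proof (bernoulli h n (Rlt_le _ _ Hh)) as B.
    assert (Pq : 0 < q ^ n) by (apply pow_lt; lra).
    rewrite Rabs_right by (apply Rle_ge; apply Rmult_le_pos; [apply pos_INR| lra]).
    assert (Ep : q ^ n * (1 + h) ^ n = 1). { rewrite <- Rpow_mult_distr. rewrite Hq'. rewrite Rinv_l. apply pow1. lra. }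
    destruct n as [|n]. lia. destruct n as [|n]. lia.
    specialize (HN n ltac:(lia)). rewrite plus_INR in HN. simpl (INR 1) in HN.
    rewrite !S_INR in *. pose proof (pos_INR n).
    set (m := INR n) in *. set (Q := q ^ S (S n)) in *. set (P := (1 + h) ^ S (S n)) in *.
    assert (Hb : (m + 1 + 1) * (m + 1) / 2 * h ^ 2 <= P) by nra.
    assert (PP : 0 < P) by nra.
    assert (Qe : Q = / P). { apply (Rmult_eq_reg_r P). rewrite Rinv_l; lra. lra. }
    rewrite Qe. apply (Rmult_lt_reg_r P). lra. rewrite Rmult_assoc, Rinv_l by lra. 
    assert (Hm : / (m + 1) < eps * h ^ 2 / 2) by exact HN.
    assert (Hm' : 2 < eps * h ^ 2 * (m + 1)).
    { apply (Rmult_lt_compat_r (m+1)) in Hm; [|lra]. rewrite Rinv_l in Hm by lra. nra. }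
    nra.
Qed.

End RealHM.
Import RealHM.

Module MainM.
Open Scope C_scope.

Lemma Cpow_R (x : R) n : RtoC (x ^ n) = Defs.Cpow (RtoC x) n.
Proof. induction n; simpl. auto. rewrite RtoC_mult, IHn. auto. Qed.

Lemma Cpow_mult (z w : C) n : Defs.Cpow (z * w) n = Defs.Cpow z n * Defs.Cpow w n.
Proof. induction n; simpl. ring. rewrite IHn. ring. Qed.

Lemma Cpow_add (z : C) n m : Defs.Cpow z (n + m) = Defs.Cpow z n * Defs.Cpow z m.
Proof. induction n; simpl. ring. rewrite IHn. ring. Qed.

Lemma Cpow_2k (z : C) k : Defs.Cpow z (2 * k) = Defs.Cpow (z * z) k.
Proof. induction k. reflexivity. replace (2 * S k)%nat with (S (S (2 * k))) by lia.
  change (z * (z * Defs.Cpow z (2 * k)) = (z * z) * Defs.Cpow (z * z) k). rewrite IHk. ring. Qed.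

Lemma Cpow_nz (z : C) n : z <> 0 -> Defs.Cpow z n <> 0.
Proof. intros Hz. induction n; simpl. apply RtoC_neq; lra. apply Cmult_neq_0; auto. Qed.

Lemma Cpow_div (z w : C) n : w <> 0 -> Defs.Cpow (z / w) n = Defs.Cpow z n / Defs.Cpow w n.
Proof. intros Hw. induction n; simpl. { field; apply RtoC_neq; lra. }
  rewrite IHn. assert (Defs.Cpow w n <> 0) by (apply Cpow_nz; auto). field. split; auto. Qed.

Lemma Cmod_Cpow (z : C) n : Cmod (Defs.Cpow z n) = (Cmod z ^ n)%R.
Proof. induction n; simpl. apply Cmod_1. rewrite Cmod_mult, IHn. auto. Qed.

Lemma div_eq (s t d : C) : d <> 0 -> s * d = t -> s = t / d.
Proof. intros Hd E. rewrite <- E. field. auto. Qed.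

Ltac cnz := repeat (rewrite <- RtoC_plus || rewrite <- RtoC_mult || rewrite <- RtoC_minus); apply RtoC_neq; nra.

Section M.
Variable a : C.
Hypothesis ha : (Cmod a < 1)%R.
Local Notation Cpow := Defs.Cpow.

Definition r : R := Cmod (A a).

Lemma r_bound : (0 <= r < 1)%R.
Proof. unfold r, A. simpl Defs.Cpow. rewrite !Cmod_mult, Cmod_1. pose proof (Cmod_ge_0 a). split; nra. Qed.

Lemma Cmod_CR j : Cmod (CR j) = INR j.
Proof. unfold CR. rewrite Cmod_R. apply Rabs_pos_eq. apply pos_INR. Qed.

Lemma w_low j : (1 <= j)%nat -> (INR j * INR j - r <= Cmod (CR j * (CR j * 1) - A a))%R.
Proof. intros Hj. pose proof (Cmod_tri2 (CR j * (CR j * 1)) (A a)).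
  rewrite !Cmod_mult, Cmod_1, Cmod_CR in H.
  unfold r. lra. Qed.

Lemma INR_sq_ge j : (1 <= j)%nat -> (1 <= INR j * INR j)%R.
Proof. intros. assert (1 <= INR j)%R by (apply (le_INR 1); lia). nra. Qed.

Lemma qq_mod j : (1 <= j)%nat -> (((1 - r) * (INR j * INR j)) ^ 2 <= Cmod (qq a j))%R.
Proof. intros Hj. pose proof (w_low j Hj). pose proof (INR_sq_ge j Hj). pose proof r_bound.
  unfold qq. simpl Defs.Cpow. rewrite !Cmod_mult, Cmod_1.
  assert (0 <= (1 - r) * (INR j * INR j))%R by nra.
  assert ((1 - r) * (INR j * INR j) <= INR j * INR j - r)%R by nra.
  simpl. nra. Qed.

Lemma qq_pos j : (1 <= j)%nat -> (0 < Cmod (qq a j))%R.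
Proof. intros Hj. pose proof (qq_mod j Hj). pose proof (INR_sq_ge j Hj). pose proof r_bound.
  assert (0 < (1 - r) * (INR j * INR j))%R by nra. nra. Qed.

Lemma Hq : forall j, (1 <= j)%nat -> qq a j <> 0.
Proof. intros j Hj E. pose proof (qq_pos j Hj). rewrite E, Cmod_0 in H. lra. Qed.

Lemma cc0 : cc 0 = 1 / 2.
Proof. unfold cc. simpl. rewrite RtoC_div by lra. f_equal; f_equal; ring. Qed.

Lemma sg0 : sg 0 = 1.
Proof. reflexivity. Qed.

Lemma CR0 : CR 0 = 0.
Proof. reflexivity. Qed.

Lemma F0 k : (1 <= k)%nat -> F a 0 k = CR k / qq a k.
Proof. intros Hk. pose proof (Hq k Hk) as Hn. unfold F, Hker, Num, Den. rewrite cc0, sg0, CR0. simpl Cprod1. field. auto. Qed.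

Lemma Cmod_F0 j : (Cmod (F a 0 (S j)) <= 2 / (1 - r) ^ 2 * tb j)%R.
Proof.
  rewrite F0 by lia. pose proof (Hq (S j) ltac:(lia)). rewrite Cmod_div by auto. rewrite Cmod_CR.
  pose proof (qq_mod (S j) ltac:(lia)). pose proof r_bound. unfold tb.
  replace (j + 1)%nat with (S j) by lia. replace (j + 2)%nat with (S (S j)) by lia.
  rewrite (S_INR (S j)). set (x := INR (S j)) in *. 
  assert (1 <= x)%R by (apply (le_INR 1); lia).
  assert (0 < 1 - r)%R by lra.
  assert (Hd : (0 < ((1 - r) * (x * x)) ^ 2)%R) by (apply pow_lt; apply Rmult_lt_0_compat; nra).
  apply (Rle_trans _ (x / ((1 - r) * (x * x)) ^ 2)).
  - unfold Rdiv. apply Rmult_le_compat_l. lra. apply Rinv_le_contravar; auto.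
  - assert (0 < (1-r)^2)%R by (apply pow_lt; lra).
    apply (Rmult_le_reg_r (((1 - r) * (x * x)) ^ 2 * (x * (x + 1)))). 
    { apply Rmult_lt_0_compat; nra. }
    field_simplify; [|nra|nra]. 
    assert (x*x*x <= x*x*x*x) by (assert (0 <= x*x*x) by (apply Rmult_le_pos; nra); nra). simpl. nra.
Qed.

Lemma qq_mod2 j : (1 <= j)%nat -> ((INR j * INR j - r) ^ 2 <= Cmod (qq a j))%R.
Proof. intros Hj. pose proof (w_low j Hj). pose proof (INR_sq_ge j Hj). pose proof r_bound.
  unfold qq. simpl Defs.Cpow. rewrite !Cmod_mult, Cmod_1. simpl. nra. Qed.

Lemma Cmod_minus_le x y : (Cmod (x - y) <= Cmod x + Cmod y)%R.
Proof. pose proof (Cmod_tri3 x 0 y). replace (x - 0) with x in H by ring. 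
  replace (0 - y) with (- y) in H by ring. rewrite Cmod_opp in H. auto. Qed.

Lemma Cmod_realp (x : R) : (0 <= x)%R -> Cmod (RtoC x) = x.
Proof. intros. rewrite Cmod_R. apply Rabs_pos_eq. auto. Qed.

Definition rho n k : C := - (CR n + 1) * (2 * CR k + CR n + 1) * Cn a n /
   (2 * (2 * CR n + 1) * (2 * CR k + CR n) * qq a (k + S n)).

Lemma F_ratio n k : (1 <= k)%nat -> F a (S n) k = F a n k * rho n k.
Proof.
  intros Hk. pose proof (Hq (k + S n)%nat ltac:(lia)) as Q. pose proof (Den_nz a n k Hq Hk) as D.
  unfold F, rho. rewrite H_S by auto. rewrite sg_S, cc_S, CR_S.
  assert (2 * CR n + 1 <> 0) by (unfold CR; pose proof (pos_INR n); cnz).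
  assert (2 * CR k + CR n <> 0) by (unfold CR; pose proof (pos_INR n); assert (1 <= INR k)%R by (apply (le_INR 1); lia); cnz).
  field. auto.
Qed.

Lemma Cn_mod n : (Cmod (Cn a n) <= (INR n + 1) ^ 2 * ((INR n + 1) ^ 2 + 4))%R.
Proof.
  unfold Cn. simpl Defs.Cpow. rewrite Cmod_mult.
  pose proof (Cmod_minus_le (CR (S n) * (CR (S n) * 1)) (4 * A a)).
  rewrite !Cmod_mult, Cmod_1, Cmod_CR in *. rewrite S_INR in *.
  replace (Cmod 4) with 4%R in H by (rewrite Cmod_realp; lra).
  pose proof r_bound. fold r in H. pose proof (pos_INR n).
  assert (0 <= (INR n + 1) * ((INR n + 1) * 1))%R by nra.
  apply (Rle_trans _ ((INR n + 1) * ((INR n + 1) * 1) * ((INR n + 1) * ((INR n + 1) * 1) + 4 * r))).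
  apply Rmult_le_compat_l; auto. simpl. nra.
Qed.

Lemma rho_bound n k : (1 <= k)%nat -> (Cmod (rho n k) <= 3 / 4)%R.
Proof.
  intros Hk. pose proof (Hq (k + S n)%nat ltac:(lia)) as Q.
  pose proof (qq_mod2 (k + S n) ltac:(lia)) as QM. pose proof (Cn_mod n) as CM.
  pose proof (pos_INR n) as Pn. assert (Kk : (1 <= INR k)%R) by (apply (le_INR 1); lia).
  pose proof r_bound as Rb.
  unfold rho. 
  replace (- (CR n + 1) * (2 * CR k + CR n + 1)) with (- RtoC ((INR n + 1) * (2 * INR k + INR n + 1))) 
    by (unfold CR; rewrite RtoC_mult, !RtoC_plus, RtoC_mult; ring).
  replace (2 * (2 * CR n + 1) * (2 * CR k + CR n)) with (RtoC (2 * (2 * INR n + 1) * (2 * INR k + INR n)))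
    by (unfold CR; rewrite !RtoC_mult, !RtoC_plus, !RtoC_mult; ring).
  assert (Hp : (0 < 2 * (2 * INR n + 1) * (2 * INR k + INR n))%R) by nra.
  rewrite Cmod_div. 2:{ apply Cmult_neq_0; auto. apply RtoC_neq. lra. }
  rewrite !Cmod_mult, Cmod_opp, !Cmod_realp by nra.
  rewrite plus_INR, S_INR in QM.
  set (X := INR n) in *. set (K := INR k) in *. set (cn := Cmod (Cn a n)) in *. set (q := Cmod (qq a (k + S n))) in *.
  assert (L1 : ((X + 1) * (X + 3) <= (K + (X + 1)) * (K + (X + 1)) - r)%R) by nra.
  assert (L2 : (((X + 1) * (X + 3)) ^ 2 <= q)%R).
  { eapply Rle_trans; [|exact QM]. apply pow_incr. split; [nra| exact L1]. }
  assert (Qp : (0 < ((X + 1) * (X + 3)) ^ 2)%R) by (apply pow_lt; nra).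
  match goal with |- (?u / ?v <= _)%R => 
    assert (Vp : (0 < v)%R) by nra; apply (Rmult_le_reg_r v); [exact Vp|];
    replace (u / v * v)%R with u by (field; nra) end.
  apply (Rle_trans _ ((X + 1) * (2 * K + X + 1) * ((X + 1) ^ 2 * ((X + 1) ^ 2 + 4)))).
  { apply Rmult_le_compat_l. nra. exact CM. }
  apply (Rle_trans _ (3 / 4 * (2 * (2 * X + 1) * (2 * K + X)) * ((X + 1) * (X + 3)) ^ 2)).
  2: { assert (0 <= 3 / 4 * (2 * (2 * X + 1) * (2 * K + X)))%R by nra. 
       pose proof (Rmult_le_compat_l _ _ _ H L2). nra. }
  assert (A1 : (X + 1 <= 2 * X + 1)%R) by lra.
  assert (A2 : (2 * K + X + 1 <= 3 / 2 * (2 * K + X))%R) by lra.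
  assert (A3 : ((X + 1) ^ 2 + 4 <= (X + 3) ^ 2)%R) by nra.
  assert (B : ((X + 1) * (2 * K + X + 1) <= (2 * X + 1) * (3 / 2 * (2 * K + X)))%R).
  { apply Rmult_le_compat; nra. }
  assert (B2 : ((X + 1) * (2 * K + X + 1) * ((X + 1) ^ 2 + 4) <= (2 * X + 1) * (3 / 2 * (2 * K + X)) * (X + 3) ^ 2)%R).
  { apply Rmult_le_compat; try nra. }
  assert (0 <= (X+1)^2)%R by nra.
  pose proof (Rmult_le_compat_l _ _ _ H B2).
  replace ((X + 1) * (2 * K + X + 1) * ((X + 1) ^ 2 * ((X + 1) ^ 2 + 4)))%R
    with ((X + 1) ^ 2 * ((X + 1) * (2 * K + X + 1) * ((X + 1) ^ 2 + 4)))%R by ring.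
  apply (Rle_trans _ _ _ H0). right. field.
Qed.

Lemma F_geom n k : (1 <= k)%nat -> (Cmod (F a n k) <= (3 / 4) ^ n * Cmod (F a 0 k))%R.
Proof.
  intros Hk. induction n.
  - simpl. lra.
  - rewrite F_ratio by auto. rewrite Cmod_mult. pose proof (rho_bound n k Hk).
    pose proof (Cmod_ge_0 (F a n k)). pose proof (Cmod_ge_0 (rho n k)). simpl pow. nra.
Qed.

Definition M0 : R := 2 / (1 - r) ^ 2.

Lemma M0_pos : (0 < M0)%R.
Proof. unfold M0. pose proof r_bound. apply Rdiv_lt_0_compat. lra. apply pow_lt. lra. Qed.

Lemma tb_decr k m : (k <= m)%nat -> (tb m <= tb k)%R.
Proof. intros. unfold tb. apply Rinv_le_contravar. apply Rmult_lt_0_compat; apply lt_0_INR; lia.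
  apply Rmult_le_compat; try apply pos_INR; apply le_INR; lia. Qed.

Lemma F_bound n k : (Cmod (F a n (k + S n)) <= (3 / 4) ^ n * (M0 * tb k))%R.
Proof.
  eapply Rle_trans. apply F_geom. lia.
  apply Rmult_le_compat_l. apply pow_le. lra.
  replace (k + S n)%nat with (S (k + n)) by lia.
  eapply Rle_trans. apply Cmod_F0. fold M0. apply Rmult_le_compat_l. pose proof M0_pos; lra.
  apply tb_decr. lia.
Qed.

Lemma Sn_exists n : exists s, is_series (fun k => F a n (k + S n)) s /\ (Cmod s <= (3 / 4) ^ n * M0)%R.
Proof.
  assert (Hb : is_series (fun k => (3 / 4) ^ n * M0 * tb k)%R ((3 / 4) ^ n * M0 * 1)%R) by apply tb_ex.
  destruct (ex_series_C (fun k => F a n (k + S n)) (fun k => (3 / 4) ^ n * M0 * tb k)%R) as [s Hs].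
  - intros k. cbv beta. rewrite Rmult_assoc. apply F_bound.
  - eexists; exact Hb.
  - exists s. split; auto. rewrite <- (Rmult_1_r ((3/4)^n * M0)). eapply series_Cmod_le. exact Hs. exact Hb.
    intros k. cbv beta. rewrite Rmult_assoc. apply F_bound.
Qed.

Definition xx n m : C := CR m * CR m + (3 * CR n + 1) * CR m + (5 * CR n * CR n + 4 * CR n + 1) / 2 - A a.

Lemma G_F n m : (1 <= m)%nat -> G a n m = F a n m * xx n m / RtoC ((2 * INR n + 1) * (2 * INR m + INR n)).
Proof.
  intros Hm. unfold G, F, xx. pose proof (pos_INR n). assert (1 <= INR m)%R by (apply (le_INR 1); lia).
  assert (2 * CR n + 1 <> 0) by (unfold CR; cnz).
  rewrite RtoC_mult, !RtoC_plus, !RtoC_mult. fold (CR n) (CR m).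
  assert (2 * CR m + CR n <> 0) by (unfold CR; cnz).
  field. auto.
Qed.

Definition Kn n : R := 1 + (3 * INR n + 1) + (5 * INR n * INR n + 4 * INR n + 1) / 2 + 1.

Lemma xx_mod n m : (1 <= m)%nat -> (Cmod (xx n m) <= Kn n * (INR m * INR m))%R.
Proof.
  intros Hm. unfold xx, Kn. pose proof (pos_INR n). assert (1 <= INR m)%R by (apply (le_INR 1); lia).
  pose proof r_bound. 
  replace (CR m * CR m + (3 * CR n + 1) * CR m + (5 * CR n * CR n + 4 * CR n + 1) / 2)
    with (RtoC (INR m * INR m + (3 * INR n + 1) * INR m + (5 * INR n * INR n + 4 * INR n + 1) / 2)).
  2:{ unfold CR. rewrite !RtoC_plus. rewrite RtoC_div by lra. repeat (rewrite RtoC_plus || rewrite RtoC_mult). auto. }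
  eapply Rle_trans. apply Cmod_minus_le. rewrite Cmod_realp by nra. fold r.
  assert (INR m <= INR m * INR m)%R by nra.
  assert (0 <= (3 * INR n + 1) * (INR m * INR m - INR m))%R by nra.
  assert (0 <= (5 * INR n * INR n + 4 * INR n + 1) / 2 * (INR m * INR m - 1))%R.
  { apply Rmult_le_pos. nra. nra. }
  nra.
Qed.

Lemma F_mod_m n m : (1 <= m)%nat -> (Cmod (F a n m) <= INR m / ((1 - r) * (INR m * INR m)) ^ 2)%R.
Proof.
  intros Hm. eapply Rle_trans. apply F_geom; auto.
  assert (Cmod (F a 0 m) <= INR m / ((1 - r) * (INR m * INR m)) ^ 2)%R.
  { rewrite F0 by auto. rewrite Cmod_div by (apply Hq; auto). rewrite Cmod_CR.
    pose proof r_bound. pose proof (INR_sq_ge m Hm).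
    apply Rmult_le_compat_l. apply pos_INR. apply Rinv_le_contravar. apply pow_lt. 
    apply Rmult_lt_0_compat; lra. apply qq_mod; auto. }
  assert (0 <= (3/4)^n <= 1)%R. { destruct n. simpl; lra. pose proof (pow_lt_1_compat (3/4) (S n) ltac:(lra) ltac:(lia)). lra. }
  pose proof (Cmod_ge_0 (F a 0 m)). nra.
Qed.

Lemma G_mod n m : (1 <= m)%nat -> (Cmod (G a n m) <= Kn n / (1 - r) ^ 2 / INR m)%R.
Proof.
  intros Hm. rewrite G_F by auto. pose proof (pos_INR n). assert (Hm1 : (1 <= INR m)%R) by (apply (le_INR 1); lia).
  pose proof r_bound.
  rewrite Cmod_div. 2:{ apply RtoC_neq. nra. }
  rewrite Cmod_mult, Cmod_realp by nra.
  pose proof (F_mod_m n m Hm). pose proof (xx_mod n m Hm).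
  pose proof (Cmod_ge_0 (F a n m)). pose proof (Cmod_ge_0 (xx n m)).
  assert (Knp : (0 <= Kn n)%R) by (unfold Kn; nra).
  set (M := INR m) in *. set (X := INR n) in *. set (f := Cmod (F a n m)) in *. set (g := Cmod (xx n m)) in *.
  assert (P1 : (0 < 1 - r)%R) by lra.
  assert (fb : (f * ((1 - r) ^ 2 * (M * M * M)) <= 1)%R).
  { assert (0 < ((1 - r) * (M * M)) ^ 2)%R by (apply pow_lt; apply Rmult_lt_0_compat; nra).
    assert (Z1 : (f * ((1 - r) * (M * M)) ^ 2 <= M)%R).
    { apply (Rmult_le_compat_r (((1 - r) * (M * M)) ^ 2)) in H1; [|lra].
      replace (M / ((1 - r) * (M * M)) ^ 2 * ((1 - r) * (M * M)) ^ 2)%R with M in H1 by (field; nra). exact H1. }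
    replace (((1 - r) * (M * M)) ^ 2)%R with (M * ((1 - r) ^ 2 * (M * M * M)))%R in Z1 by ring.
    nra. }
  assert (Q : (0 < (1 - r) ^ 2 * (M * M * M))%R) by (apply Rmult_lt_0_compat; [apply pow_lt; lra| nra]).
  assert (D : (1 <= (2 * X + 1) * (2 * M + X))%R) by nra.
  unfold Rdiv. 
  apply (Rle_trans _ (f * g)).
  { rewrite <- (Rmult_1_r (f * g)) at 2. apply Rmult_le_compat_l. nra. 
    rewrite <- Rinv_1. apply Rinv_le_contravar; lra. }
  apply (Rle_trans _ (f * (Kn n * (M * M)))). apply Rmult_le_compat_l; lra.
  assert (f <= / ((1 - r) ^ 2 * (M * M * M)))%R.
  { apply (Rmult_le_reg_r ((1 - r) ^ 2 * (M * M * M))). lra. rewrite Rinv_l by lra. lra. }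
  apply (Rle_trans _ (/ ((1 - r) ^ 2 * (M * M * M)) * (Kn n * (M * M)))).
  apply Rmult_le_compat_r. nra. auto.
  right. field. split; nra.
Qed.

Lemma G_cv n : cv (fun k => G a n (k + S n)) 0.
Proof.
  intros eps He. set (B := (Kn n / (1 - r) ^ 2)%R). pose proof r_bound.
  assert (Bp : (0 < B)%R). { unfold B, Kn. pose proof (pos_INR n). apply Rdiv_lt_0_compat. nra. apply pow_lt; lra. }
  destruct (inv_small (eps / B)) as [N HN]. apply Rdiv_lt_0_compat; lra.
  exists N. intros k Hk. replace (G a n (k + S n) - 0) with (G a n (k + S n)) by ring.
  eapply Rle_lt_trans. apply G_mod. lia. fold B.
  specialize (HN k Hk).
  assert (/ INR (k + S n) <= / INR (k + 1))%R. { apply Rinv_le_contravar. apply lt_0_INR; lia. apply le_INR; lia. }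
  unfold Rdiv at 1. 
  apply (Rmult_lt_compat_l B) in HN; auto. replace (B * (eps / B))%R with eps in HN by (field; lra).
  assert (B * / INR (k + S n) <= B * / INR (k + 1))%R by (apply Rmult_le_compat_l; lra). lra.
Qed.

Lemma recur n s0 s1 : is_series (fun k => F a n (k + S n)) s0 ->
  is_series (fun k => F a (S n) (k + S (S n))) s1 -> rhs_term a (S n) = s0 - s1.
Proof.
  intros H0 H1.
  set (u := fun k => F a (S n) (k + S n)).
  assert (Hu : is_series u (u O + s1)).
  { apply series_shift. eapply series_ext; [|exact H1]. intros k. unfold u. f_equal. lia. }
  pose proof (series_minus _ _ _ _ Hu H0) as D.
  pose proof (series_tele _ (G_cv n)) as T.
  assert (E : forall k, u k - F a n (k + S n) = G a n (S k + S n) - G a n (k + S n)).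
  { intros k. unfold u. rewrite WZ. f_equal. f_equal. 
    apply Den_nz. apply Hq. lia. apply Hq. lia. apply Hq. lia. }
  apply (series_ext _ _ _ E) in D.
  pose proof (is_series_unique_C _ _ _ D T) as U. simpl in U.
  rewrite diag by apply Hq. unfold u in U. simpl plus in U.
  replace (s0 - s1) with (F a (S n) (S n) - (F a (S n) (S n) + s1 - s0)) by ring.
  replace (0 + S n)%nat with (S n) in U by lia. rewrite U. ring.
Qed.

Definition Sv (n : nat) : C := proj1_sig (constructive_indefinite_description _ (Sn_exists n)).

Lemma Sv_spec n : is_series (fun k => F a n (k + S n)) (Sv n) /\ (Cmod (Sv n) <= (3 / 4) ^ n * M0)%R.
Proof. unfold Sv. destruct (constructive_indefinite_description _ (Sn_exists n)). simpl. auto. Qed.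

Lemma partial_rhs N : sum_n (fun n => rhs_term a (S n)) N = Sv 0 - Sv (S N).
Proof.
  induction N.
  - rewrite sum_O. apply recur; apply Sv_spec.
  - rewrite sum_Sn, IHN. rewrite (recur (S N) (Sv (S N)) (Sv (S (S N)))) by apply Sv_spec.
    change (Sv 0 - Sv (S N) + (Sv (S N) - Sv (S (S N))) = Sv 0 - Sv (S (S N))). ring.
Qed.

Lemma rhs_series : is_series (fun n => rhs_term a (S n)) (Sv 0).
Proof.
  apply series_cv. intros eps He. pose proof M0_pos.
  destruct (pow_lt_1_zero (3/4) ltac:(rewrite Rabs_pos_eq; lra) (eps / M0)) as [N HN].
  apply Rdiv_lt_0_compat; lra.
  exists N. intros n Hn. rewrite partial_rhs.
  replace (Sv 0 - Sv (S n) - Sv 0) with (- Sv (S n)) by ring. rewrite Cmod_opp.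
  destruct (Sv_spec (S n)) as [_ B]. specialize (HN (S n) ltac:(lia)).
  rewrite Rabs_pos_eq in HN by (apply pow_le; lra).
  apply (Rmult_lt_compat_r M0) in HN; auto. replace (eps / M0 * M0)%R with eps in HN by (field; lra). lra.
Qed.

Definition ltm k j : C := RtoC (INR (S k)) * Cpow a (2 * k) * RtoC (/ INR (S j) ^ (2 * k + 3)).

Lemma inv_pow_tb j m : (2 <= m)%nat -> (/ INR (S j) ^ m <= 2 * tb j)%R.
Proof.
  intros Hm. unfold tb. replace (j + 1)%nat with (S j) by lia. replace (j + 2)%nat with (S (S j)) by lia.
  rewrite (S_INR (S j)). set (x := INR (S j)). assert (1 <= x)%R by (apply (le_INR 1); lia).
  assert (x ^ 2 <= x ^ m)%R by (apply Rle_pow; auto).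
  apply (Rle_trans _ (/ x ^ 2)). apply Rinv_le_contravar. apply pow_lt; lra. auto.
  rewrite <- (Rmult_1_l (/ x^2)). apply (Rmult_le_reg_r (x ^ 2 * (x * (x + 1)))). 
  apply Rmult_lt_0_compat. apply pow_lt; lra. nra.
  replace (1 * / x ^ 2 * (x ^ 2 * (x * (x + 1))))%R with (x * (x + 1))%R by (field; lra).
  replace (2 * / (x * (x + 1)) * (x ^ 2 * (x * (x + 1))))%R with (2 * x ^ 2)%R by (field; lra).
  simpl. nra.
Qed.

Lemma zeta_series k : is_series (fun j => ltm k j) (lhs_term a (S k)).
Proof.
  unfold lhs_term. replace (2 * S k - 2)%nat with (2 * k)%nat by lia.
  replace (2 * S k + 1)%nat with (2 * k + 3)%nat by lia.
  unfold zeta. rewrite (Series_ext _ (fun j => / INR (S j) ^ (2 * k + 3))%R).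
  2:{ intros j. rewrite Rpower_pow. auto. apply lt_0_INR; lia. }
  assert (Ex : ex_series (fun j => / INR (S j) ^ (2 * k + 3))%R).
  { apply (@ex_series_le R_AbsRing R_CompleteNormedModule _ (fun j => 2 * tb j)%R).
    - intros j. change (Rabs (/ INR (S j) ^ (2 * k + 3)) <= 2 * tb j)%R.
      rewrite Rabs_pos_eq. apply inv_pow_tb. lia. apply Rlt_le, Rinv_0_lt_compat, pow_lt, lt_0_INR. lia.
    - eexists. apply tb_ex. }
  pose proof (series_RtoC _ _ (Series_correct _ Ex)) as H1.
  pose proof (series_scal (RtoC (INR (S k)) * Cpow a (2 * k)) _ _ H1) as H2.
  replace (RtoC (INR (S k) * Series (fun j => / INR (S j) ^ (2 * k + 3))%R) * Cpow a (2 * k))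
    with (RtoC (INR (S k)) * Cpow a (2 * k) * RtoC (Series (fun j => / INR (S j) ^ (2 * k + 3))%R)).
  2:{ rewrite RtoC_mult. ring. }
  exact H2.
Qed.

Definition gK K j : C := sum_n (fun k => ltm k j) K.

Lemma gK_series K : is_series (gK K) (sum_n (fun k => lhs_term a (S k)) K).
Proof.
  induction K.
  - rewrite sum_O. eapply series_ext; [|apply zeta_series]. intros j. unfold gK. rewrite sum_O. auto.
  - rewrite sum_Sn. pose proof (series_plus _ _ _ _ IHK (zeta_series (S K))) as P.
    eapply series_ext; [|exact P]. intros j. unfold gK. rewrite sum_Sn. auto.
Qed.

Definition yj j : C := CR (S j).
Definition Xj j : C := A a / (yj j * yj j).

Lemma yj_nz j : yj j <> 0.
Proof. apply CR_nz. lia. Qed.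

Lemma ltm_form k j : ltm k j = / (yj j * yj j * yj j) * (CR (S k) * Cpow (Xj j) k).
Proof.
  unfold ltm, Xj. pose proof (yj_nz j) as Y.
  rewrite RtoC_inv. 2:{ apply pow_nonzero. apply not_0_INR. lia. }
  rewrite Cpow_R. fold (CR (S j)). fold (yj j). rewrite Cpow_add, !Cpow_2k. 
  rewrite Cpow_div by (apply Cmult_neq_0; auto). unfold A.
  replace (Cpow a 2) with (a * a) by (simpl; ring).
  assert (Cpow (yj j * yj j) k <> 0) by (apply Cpow_nz; apply Cmult_neq_0; auto).
  change (CR (S k)) with (RtoC (INR (S k))). simpl (Cpow (yj j) 3).
  field. auto.
Qed.

Lemma geo K (X : C) : sum_n (fun k => CR (S k) * Cpow X k) K * ((1 - X) * (1 - X)) =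
  1 - CR (K + 2) * Cpow X (K + 1) + CR (K + 1) * Cpow X (K + 2).
Proof.
  induction K.
  - rewrite sum_O. replace (0 + 2)%nat with 2%nat by lia. replace (0 + 1)%nat with 1%nat by lia.
    rewrite !CR_S, CR0. simpl Cpow. ring.
  - rewrite sum_Sn. change ((sum_n (fun k => CR (S k) * Cpow X k) K + CR (S (S K)) * Cpow X (S K)) * ((1 - X) * (1 - X)) =
      1 - CR (S K + 2) * Cpow X (S K + 1) + CR (S K + 1) * Cpow X (S K + 2)).
    rewrite Cmult_plus_distr_r, IHK.
    replace (S K + 2)%nat with (S (S (S K))) by lia. replace (S K + 1)%nat with (S (S K)) by lia.
    replace (K + 2)%nat with (S (S K)) by lia. replace (K + 1)%nat with (S K) by lia.
    rewrite !CR_S. simpl Cpow. ring.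
Qed.

Lemma gK_form K j : gK K j = / (yj j * yj j * yj j) * sum_n (fun k => CR (S k) * Cpow (Xj j) k) K.
Proof.
  unfold gK. induction K.
  - rewrite !sum_O. apply ltm_form.
  - rewrite !sum_Sn. rewrite IHK. rewrite ltm_form.
    change (/ (yj j * yj j * yj j) * sum_n (fun k => CR (S k) * Cpow (Xj j) k) K +
      / (yj j * yj j * yj j) * (CR (S (S K)) * Cpow (Xj j) (S K)) =
      / (yj j * yj j * yj j) * (sum_n (fun k => CR (S k) * Cpow (Xj j) k) K + CR (S (S K)) * Cpow (Xj j) (S K))).
    ring.
Qed.

Lemma Xj_mod j : (Cmod (Xj j) <= r)%R.
Proof.
  unfold Xj. pose proof (yj_nz j). rewrite Cmod_div by (apply Cmult_neq_0; auto). rewrite Cmod_mult.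
  unfold yj. rewrite Cmod_CR. fold r. pose proof r_bound. assert (1 <= INR (S j))%R by (apply (le_INR 1); lia).
  unfold Rdiv. rewrite <- (Rmult_1_r r) at 2. apply Rmult_le_compat_l. lra.
  rewrite <- Rinv_1. apply Rinv_le_contravar. lra. nra.
Qed.

Lemma oneX_mod j : (1 - r <= Cmod (1 - Xj j))%R.
Proof. pose proof (Cmod_tri2 1 (1 - Xj j)). replace (1 - (1 - Xj j)) with (Xj j) in H by ring.
  rewrite Cmod_1 in H. pose proof (Xj_mod j). lra. Qed.

Lemma diffA K j : F a 0 (S j) - gK K j =
  / (yj j * yj j * yj j) * (CR (K + 2) * Cpow (Xj j) (K + 1) - CR (K + 1) * Cpow (Xj j) (K + 2)) / ((1 - Xj j) * (1 - Xj j)).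
Proof.
  assert (N1 : 1 - Xj j <> 0).
  { intro Z. pose proof (oneX_mod j). rewrite Z, Cmod_0 in H. pose proof r_bound. lra. }
  pose proof (yj_nz j) as Y.
  rewrite gK_form. 
  assert (G : sum_n (fun k => CR (S k) * Cpow (Xj j) k) K = 
    (1 - CR (K + 2) * Cpow (Xj j) (K + 1) + CR (K + 1) * Cpow (Xj j) (K + 2)) / ((1 - Xj j) * (1 - Xj j))).
  { apply div_eq. apply Cmult_neq_0; auto. apply geo. }
  rewrite G. rewrite F0 by lia. fold (yj j). unfold qq. simpl Cpow.
  unfold Xj in *. 
  assert (yj j * yj j - A a <> 0).
  { intro Z. apply N1. replace (A a) with (yj j * yj j - (yj j * yj j - A a)) by ring. rewrite Z. field. auto. }
  change (CR (S j)) with (yj j).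
  field. repeat split; auto.
Qed.

Definition eK K : R := 2 * ((2 * INR K + 3) * r ^ (K + 1)) / (1 - r) ^ 2.

Lemma diff_mod K j : (Cmod (gK K j - F a 0 (S j)) <= eK K * tb j)%R.
Proof.
  rewrite Cmod_sym, diffA. pose proof (yj_nz j) as Y. pose proof r_bound as Rb.
  assert (N1 : 1 - Xj j <> 0).
  { intro Z. pose proof (oneX_mod j). rewrite Z, Cmod_0 in H. lra. }
  rewrite Cmod_div by (apply Cmult_neq_0; auto).
  rewrite Cmod_mult, Cmod_inv by (repeat apply Cmult_neq_0; auto).
  rewrite (Cmod_mult (1 - Xj j)).
  assert (Yc : Cmod (yj j * yj j * yj j) = (INR (S j) ^ 3)%R).
  { unfold yj. rewrite !Cmod_mult, Cmod_CR. simpl. ring. }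
  rewrite Yc.
  pose proof (inv_pow_tb j 3 ltac:(lia)) as T.
  pose proof (oneX_mod j) as O1. pose proof (Xj_mod j) as Xm.
  pose proof (Cmod_ge_0 (Xj j)).
  assert (Nm : (Cmod (CR (K + 2) * Cpow (Xj j) (K + 1) - CR (K + 1) * Cpow (Xj j) (K + 2)) <= (2 * INR K + 3) * r ^ (K + 1))%R).
  { eapply Rle_trans. apply Cmod_minus_le. rewrite !Cmod_mult, !Cmod_CR, !Cmod_Cpow.
    rewrite !plus_INR. simpl (INR 2). simpl (INR 1). pose proof (pos_INR K).
    assert (P1 : (Cmod (Xj j) ^ (K + 1) <= r ^ (K + 1))%R) by (apply pow_incr; lra).
    assert (P2 : (Cmod (Xj j) ^ (K + 2) <= r ^ (K + 1))%R).
    { replace (K + 2)%nat with (S (K + 1)) by lia. simpl. 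
      assert (0 <= Cmod (Xj j) ^ (K + 1))%R by (apply pow_le; lra). nra. }
    assert (0 <= Cmod (Xj j) ^ (K + 1))%R by (apply pow_le; lra).
    assert (0 <= Cmod (Xj j) ^ (K + 2))%R by (apply pow_le; lra).
    nra. }
  set (nm := Cmod (CR (K + 2) * Cpow (Xj j) (K + 1) - CR (K + 1) * Cpow (Xj j) (K + 2))) in *.
  set (o := Cmod (1 - Xj j)) in *.
  set (iy := (/ INR (S j) ^ 3)%R) in *.
  set (w := ((2 * INR K + 3) * r ^ (K + 1))%R) in *.
  assert (iyp : (0 <= iy)%R) by (unfold iy; apply Rlt_le, Rinv_0_lt_compat, pow_lt, lt_0_INR; lia).
  assert (nmp : (0 <= nm)%R) by apply Cmod_ge_0.
  assert (op : (0 < 1 - r)%R) by lra.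
  unfold eK. fold w.
  assert (Hoo : ((1 - r) ^ 2 <= o * o)%R) by (simpl; nra).
  assert (Hop : (0 < (1 - r) ^ 2)%R) by (apply pow_lt; lra).
  apply (Rle_trans _ (iy * nm / (1 - r) ^ 2)).
  { unfold Rdiv. apply Rmult_le_compat_l. nra. apply Rinv_le_contravar; auto. }
  apply (Rle_trans _ (2 * tb j * w / (1 - r) ^ 2)).
  { unfold Rdiv. apply Rmult_le_compat_r. left; apply Rinv_0_lt_compat; auto.
    apply Rmult_le_compat; auto. }
  right. field. lra.
Qed.

Lemma eK_cv : cvR eK 0.
Proof.
  intros eps He. pose proof r_bound as Rb.
  assert (op : (0 < (1 - r) ^ 2)%R) by (apply pow_lt; lra).
  destruct (Kq r Rb (eps * (1 - r) ^ 2 / 8)%R) as [N1 H1]. apply Rdiv_lt_0_compat; [nra|lra].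
  destruct (pow_lt_1_zero r ltac:(rewrite Rabs_pos_eq; lra) (eps * (1 - r) ^ 2 / 12)%R) as [N2 H2]. apply Rdiv_lt_0_compat; [nra|lra].
  exists (N1 + N2)%nat. intros K HK. specialize (H1 K ltac:(lia)). specialize (H2 K ltac:(lia)).
  rewrite Rminus_0_r, Rabs_pos_eq in H1 by (apply Rmult_le_pos; [apply pos_INR| apply pow_le; lra]).
  rewrite Rabs_pos_eq in H2 by (apply pow_le; lra).
  unfold eK. rewrite Rminus_0_r. 
  assert (R1 : (r ^ (K + 1) <= r ^ K)%R).
  { replace (K + 1)%nat with (S K) by lia. simpl. assert (0 <= r ^ K)%R by (apply pow_le; lra). nra. }
  assert (P : (0 <= (2 * INR K + 3) * r ^ (K + 1))%R).
  { apply Rmult_le_pos. pose proof (pos_INR K); lra. apply pow_le; lra. }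
  rewrite Rabs_pos_eq. 2:{ apply Rmult_le_pos. lra. left; apply Rinv_0_lt_compat; auto. }
  assert (B : ((2 * INR K + 3) * r ^ (K + 1) <= 2 * (INR K * r ^ K) + 3 * r ^ K)%R).
  { pose proof (pos_INR K). assert (0 <= 2 * INR K + 3)%R by lra. 
    pose proof (Rmult_le_compat_l _ _ _ H0 R1). nra. }
  apply (Rmult_lt_reg_r ((1 - r) ^ 2)). auto.
  replace (2 * ((2 * INR K + 3) * r ^ (K + 1)) / (1 - r) ^ 2 * (1 - r) ^ 2)%R with (2 * ((2 * INR K + 3) * r ^ (K + 1)))%R by (field; lra).
  nra.
Qed.

Lemma lhs_series : is_series (fun k => lhs_term a (S k)) (Sv 0).
Proof.
  destruct (Sv_spec 0) as [F0s _].
  assert (F0s' : is_series (fun j => F a 0 (S j)) (Sv 0)).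
  { eapply series_ext; [|exact F0s]. intros j. cbv beta. f_equal. lia. }
  apply series_cv. intros eps He. destruct (eK_cv eps He) as [N HN]. exists N. intros K HK.
  pose proof (series_minus _ _ _ _ (gK_series K) F0s') as D.
  assert (Cmod (sum_n (fun k => lhs_term a (S k)) K - Sv 0) <= eK K * 1)%R.
  { eapply series_Cmod_le. exact D. apply tb_ex. intros j. apply diff_mod. }
  specialize (HN K HK). rewrite Rminus_0_r in HN. pose proof (Rle_abs (eK K)). lra.
Qed.
End M.

End MainM.
Import MainM.

Open Scope R_scope.
Theorem corollary6 (a : C) (ha : Cmod a < 1) :
  exists L : C,
    is_series (fun k : nat => lhs_term a (S k)) L /\
    is_series (fun n : nat => rhs_term a (S n)) L.
Proof. exists (Sv a ha 0). split. apply lhs_series. apply rhs_series. Qed.
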